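(* Assume the Margin assumption holds and that $\|\cdot\|$ and $\|\cdot\|_*$ are strictly convex. Let $(y_t,b_t)$ and $d_t$, $t\ge1$, be generated by the SMM algorithm (with the initialization terminating). Then for all $t\ge1$, $$y_*^\top v(y_t)\ \ge\ \|y_*\|_*\,\frac{d_*}{d_t}\ >0.$$
   Context: Setting: $\mathcal{A}\subseteq\mathbb{R}^d$, labels $\ell(A)\in\{\pm1\}$, $\mathcal{A}^\pm=\{A\in\mathcal{A}:\ell(A)=\pm1\}$; $\operatorname{sign}(0)=+1$; norm $\|\cdot\|$ with dual $\|y\|_*=\max_{\|w\|\le1}y^\top w$; constant $c>0$; strict convexity of a norm $N$: $N(\beta w+(1-\beta)z)<\beta N(w)+(1-\beta)N(z)$ for $\beta\in(0,1)$ and $w,z$ non-collinear; under it, for $y\neq0$, $v(y)$ is the unique maximizer of $y^\top w$ over $\|w\|\le1$, and $v(0)=0$. Predicted label $\hat\ell(x,y,b)=\operatorname{sign}(y^\top x+b-2\|y\|_*/c)$. Response: for $y\ne0$, $r(A,y,b)=A+(\tfrac2c-\tfrac{y^\top A+b}{\|y\|_*})v(y)$ if $0\le\tfrac{y^\top A+b}{\|y\|_*}<\tfrac2c$, else $A$. Proxy: for $y\ne0$, $s(A,y,b)=A-\tfrac{y^\top A+b}{\|y\|_*}v(y)$ if $0\le\tfrac{y^\top A+b}{\|y\|_*}<\tfrac2c$ and $\ell(A)=-1$; $=A+(\tfrac2c-\tfrac{y^\top A+b}{\|y\|_*})v(y)$ if that range condition holds and $\ell(A)=+1$; $=A$ otherwise;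 $r(A,0,b)=s(A,0,b)=A$. Margin function $h(y,b;\widetilde{\mathcal{A}}^+,\widetilde{\mathcal{A}}^-)=\min\{\min_{x\in\widetilde{\mathcal{A}}^+}(y^\top x+b),\min_{x\in\widetilde{\mathcal{A}}^-}(-y^\top x-b)\}$. Margin assumption: $d_*:=\max_{y\ne0,b\in\mathbb{R}}\min_{A\in\mathcal{A}}\ell(A)\frac{y^\top A+b}{\|y\|_*}$ is attained at some $(y_*,b_* )$ with $y_*\neq0$, and $d_*>0$. SMM algorithm: agents with true features in $\mathcal{A}$ arrive sequentially. Initialization: start with $\widetilde{\mathcal{A}}_0^\pm=\emptyset$ and $(y,b)=(0,1)$; each arriving agent (responding with its true $A$ since $y=0$) has its label revealed and $A$ is added to $\widetilde{\mathcal{A}}_0^+$ or $\widetilde{\mathcal{A}}_0^-$ by label; then $b:=-1$ if $\widetilde{\mathcal{A}}_0^+=\emptyset$, else $b:=+1$ if $\widetilde{\mathcal{A}}_0^-=\emptyset$; stop once both are nonempty. Let $(y_1,b_1)$ be an optimal solution, and $d_1$ the optimal value, of $\max\{h(y,b;\widetilde{\mathcal{A}}_0^+,\widetilde{\mathcal{A}}_0^-):\|y\|_*\le1,b\in\mathbb{R}\}$. For $t=1,2,\dots$: agent $A_t\in\mathcal{A}$ is shown $(y_t,b_t)$, responds $r(A_t,y_t,b_t)$, is predicted $\hat\ell(r(A_t,y_t,b_t),y_t,b_t)$; then $\ell(A_t)$ is revealed, $s(A_t,y_t,b_t)$ is added to $\widetilde{\mathcal{A}}_t^+:=\widetilde{\mathcal{A}}_{t-1}^+\cup\{s(A_t,y_t,b_t)\}$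 if $\ell(A_t)=+1$ (else to $\widetilde{\mathcal{A}}_t^-$, the other set being unchanged), and $(y_{t+1},b_{t+1})$ is an optimal solution, with optimal value $d_{t+1}$, of $\max\{h(y,b;\widetilde{\mathcal{A}}_t^+,\widetilde{\mathcal{A}}_t^-):\|y\|_*\le1,b\in\mathbb{R}\}$. *)

(* Defs.v *)
From HB Require Import structures.
From mathcomp Require Import all_boot all_order all_algebra.
From mathcomp Require Import classical_sets boolp reals ereal constructive_ereal.
Set Implicit Arguments. Unset Strict Implicit. Unset Printing Implicit Defensive.
Import Order.TTheory GRing.Theory Num.Theory.
Local Open Scope classical_set_scope.
Local Open Scope ring_scope.

Section SMM.
Variables (R : realType) (d : nat).
Notation vec := 'rV[R]_d.

Definition dot (y x : vec) : R := \sum_(i < d) y 0 i * x 0 i.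

Definition is_norm (N : vec -> R) : Prop :=
  [/\ forall x, N x = 0 -> x = 0,
      forall (a : R) x, N (a *: x) = `|a| * N x &
      forall x z, N (x + z) <= N x + N z].

Definition is_dual_norm (N D : vec -> R) : Prop :=
  forall y, (forall w, N w <= 1 -> dot y w <= D y) /\
            (exists w, N w <= 1 /\ dot y w = D y).

Definition collinear (w z : vec) : Prop :=
  exists a : R, w = a *: z \/ z = a *: w.

Definition strictly_convex (N : vec -> R) : Prop :=
  forall (beta : R) (w z : vec), 0 < beta < 1 -> ~ collinear w z ->
    N (beta *: w + (1 - beta) *: z) < beta * N w + (1 - beta) * N z.

(* v(y): the (unique, under strict convexity of N) maximizer of y^T w over
   N w <= 1 for y <> 0, and v(0) = 0. *)
Definition vmax (N D : vec -> R) (y : vec) : vec :=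
  if y == 0 then 0 else xget 0 [set w | N w <= 1 /\ dot y w = D y].

Definition lsign (l : bool) : R := if l then 1 else -1.

Definition resp (N D : vec -> R) (c : R) (A y : vec) (b : R) : vec :=
  if y == 0 then A else
  let q := (dot y A + b) / D y in
  if (0 <= q) && (q < 2 / c) then A + (2 / c - q) *: vmax N D y else A.

Definition proxy (N D : vec -> R) (c : R) (lab : vec -> bool)
    (A y : vec) (b : R) : vec :=
  if y == 0 then A else
  let q := (dot y A + b) / D y in
  if (0 <= q) && (q < 2 / c) then
    (if lab A then A + (2 / c - q) *: vmax N D y else A - q *: vmax N D y)
  else A.

(* margin function h(y,b; S+, S-) (min of infima; sets are finite and
   nonempty in the algorithm, so these are minima) *)
Definition hmargin (Sp Sm : set vec) (y : vec) (b : R) : \bar R :=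
  Order.min (ereal_inf [set ((dot y x + b)%:E) | x in Sp])
            (ereal_inf [set ((- dot y x - b)%:E) | x in Sm]).

Definition optimal_sol (D : vec -> R) (Sp Sm : set vec) (y : vec) (b dv : R)
  : Prop :=
  [/\ D y <= 1, hmargin Sp Sm y b = dv%:E &
      forall y' b', D y' <= 1 -> (hmargin Sp Sm y' b' <= dv%:E)%E].

Definition smargin (D : vec -> R) (lab : vec -> bool) (A y : vec) (b : R) : R :=
  lsign (lab A) * (dot y A + b) / D y.

Definition set_margin (D : vec -> R) (lab : vec -> bool) (calA : set vec)
    (y : vec) (b : R) : \bar R :=
  ereal_inf [set (smargin D lab A y b)%:E | A in calA].

Definition margin_assumption (D : vec -> R) (lab : vec -> bool) (calA : set vec)
    (yst : vec) (bst dst : R) : Prop :=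
  [/\ yst != 0, set_margin D lab calA yst bst = dst%:E,
      (forall y b, y != 0 -> (set_margin D lab calA y b <= dst%:E)%E) &
      0 < dst].

(* Initialization phase: the agents' true features in arrival order; the phase
   stops as soon as both labels have been seen. *)
Definition init_ok (calA : set vec) (lab : vec -> bool) (s : seq vec) : Prop :=
  [/\ forall x, x \in s -> calA x,
      has lab s, has (fun x => ~~ lab x) s &
      ~~ (has lab (take (size s).-1 s) &&
          has (fun x => ~~ lab x) (take (size s).-1 s))].

Definition init_set (lab : vec -> bool) (s : seq vec) (pos : bool) : set vec :=
  [set x | x \in s /\ lab x = pos].

End SMM.

(* Main.v *)
Require Import Defs.
From HB Require Import structures.
From mathcomp Require Import all_boot all_order all_algebra.
From mathcomp Require Import classical_sets boolp reals ereal constructive_ereal.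
From mathcomp Require Import all_classical all_reals all_analysis.
From mathcomp Require Import lra.
Set Implicit Arguments. Unset Strict Implicit. Unset Printing Implicit Defensive.
Import Order.TTheory GRing.Theory Num.Theory.
Import numFieldNormedType.Exports.
Local Open Scope classical_set_scope.
Local Open Scope ring_scope.
Lemma dotDr (R : realType) d (y x z : 'rV[R]_d) : dot y (x + z) = dot y x + dot y z.
Proof. by rewrite /dot -big_split; apply: eq_bigr => i _; rewrite mxE mulrDr. Qed.
Lemma dotDl (R : realType) d (y x z : 'rV[R]_d) : dot (x + z) y = dot x y + dot z y.
Proof. by rewrite /dot -big_split; apply: eq_bigr => i _; rewrite mxE mulrDl. Qed.
Lemma dotZr (R : realType) d (y x : 'rV[R]_d) a : dot y (a *: x) = a * dot y x.
Proof. by rewrite /dot mulr_sumr; apply: eq_bigr => i _; rewrite mxE mulrCA. Qed.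
Lemma dotZl (R : realType) d (y x : 'rV[R]_d) a : dot (a *: x) y = a * dot x y.
Proof. by rewrite /dot mulr_sumr; apply: eq_bigr => i _; rewrite mxE mulrA. Qed.
Lemma dotNr (R : realType) d (y x : 'rV[R]_d) : dot y (- x) = - dot y x.
Proof. by rewrite -scaleN1r dotZr mulN1r. Qed.
Lemma dotNl (R : realType) d (y x : 'rV[R]_d) : dot (- x) y = - dot x y.
Proof. by rewrite -scaleN1r dotZl mulN1r. Qed.
Lemma dot0r (R : realType) d (y : 'rV[R]_d) : dot y 0 = 0.
Proof. by rewrite -(scale0r 0) dotZr mul0r. Qed.
Lemma dot0l (R : realType) d (y : 'rV[R]_d) : dot 0 y = 0.
Proof. by rewrite -(scale0r 0) dotZl mul0r. Qed.
Lemma dot_self_gt0 (R : realType) d (y : 'rV[R]_d) : y != 0 -> 0 < dot y y.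
Proof.
move=> y0; rewrite /dot lt_neqAle sumr_ge0 ?andbT; last by move=> i _; rewrite -expr2 sqr_ge0.
apply/negP => /eqP/esym/eqP; rewrite psumr_eq0; last by move=> i _; rewrite -expr2 sqr_ge0.
move=> /allP H; move/negP: y0; apply; apply/eqP/rowP => i.
have := H i (mem_index_enum i); rewrite -expr2 sqrf_eq0 mxE => /eqP ->//.
Qed.

Lemma N0 (R : realType) d (N : 'rV[R]_d -> R) : is_norm N -> N 0 = 0.
Proof. by case=> _ hZ _; rewrite -(scale0r 0) hZ normr0 mul0r. Qed.
Lemma NN (R : realType) d (N : 'rV[R]_d -> R) x : is_norm N -> N (- x) = N x.
Proof. by case=> _ hZ _; rewrite -scaleN1r hZ normrN1 mul1r. Qed.
Lemma N_ge0 (R : realType) d (N : 'rV[R]_d -> R) x : is_norm N -> 0 <= N x.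
Proof.
move=> hN; have := hN; case=> _ _ hT; have := hT x (- x).
rewrite subrr (N0 hN) (NN _ hN) -mulr2n.
by rewrite -mulr_natr pmulr_lge0.
Qed.
Lemma D_ge0 (R : realType) d (N D : 'rV[R]_d -> R) y :
  is_norm N -> is_dual_norm N D -> 0 <= D y.
Proof. by move=> hN hD; have [h _] := hD y; have := h 0; rewrite (N0 hN) dot0r; apply. Qed.

Lemma dot_leD (R : realType) d (N D : 'rV[R]_d -> R) y w :
  is_norm N -> is_dual_norm N D -> dot y w <= D y * N w.
Proof.
move=> hN hD; have [h _] := hD y.
have [Nw0|Nw0] := eqVneq (N w) 0.
  have := hN; case=> h0 _ _; by rewrite Nw0 (h0 _ Nw0) dot0r mulr0.
have Npos : 0 < N w by rewrite lt_neqAle eq_sym Nw0 N_ge0.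
have := h ((N w)^-1 *: w); rewrite dotZr; have := hN; case=> _ hZ _.
rewrite hZ ger0_norm; last by rewrite invr_ge0 ltW.
rewrite mulVf // lexx => /(_ isT).
by rewrite -ler_pdivlMl ?invr_gt0 // invrK mulrC.
Qed.

Lemma D_triangle (R : realType) d (N D : 'rV[R]_d -> R) y y' :
  is_norm N -> is_dual_norm N D -> D (y + y') <= D y + D y'.
Proof.
move=> hN hD; have [_ [w [Nw <-]]] := hD (y + y').
rewrite dotDl lerD //; [have [h _] := hD y|have [h _] := hD y']; exact: h.
Qed.

Lemma D_scale (R : realType) d (N D : 'rV[R]_d -> R) y a :
  is_norm N -> is_dual_norm N D -> 0 <= a -> D (a *: y) = a * D y.
Proof.
move=> hN hD a0; apply/le_anti/andP; split.
  have [_ [w [Nw <-]]] := hD (a *: y); rewrite dotZl ler_wpM2l //.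
  by have [h _] := hD y; exact: h.
have [_ [w [Nw <-]]] := hD y; rewrite -dotZl.
by have [h _] := hD (a *: y); exact: h.
Qed.

Lemma D_pos (R : realType) d (N D : 'rV[R]_d -> R) y :
  is_norm N -> is_dual_norm N D -> y != 0 -> 0 < D y.
Proof.
move=> hN hD y0; have := dot_leD y y hN hD; have := dot_self_gt0 y0.
move=> h1 h2; have h3 := lt_le_trans h1 h2.
have := N_ge0 y hN; have := D_ge0 y hN hD => a b.
rewrite lt_neqAle a andbT; apply/negP => /eqP H; move: h3; rewrite -H mul0r ltxx //.
Qed.
Lemma max_unique (R : realType) d (N D : 'rV[R]_d -> R) y w1 w2 :
  is_norm N -> is_dual_norm N D -> strictly_convex N -> y != 0 ->
  N w1 <= 1 -> dot y w1 = D y -> N w2 <= 1 -> dot y w2 = D y -> w1 = w2.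
Proof.
move=> hN hD hS y0 N1 e1 N2 e2; have Dp := D_pos hN hD y0.
have [[a [h|h]]|nc] := pselect (collinear w1 w2).
- move: e1; rewrite h dotZr e2 => /eqP; rewrite -subr_eq0 -{2}(mul1r (D y)) -mulrBl.
  by rewrite mulf_eq0 (gt_eqF Dp) orbF subr_eq0 => /eqP ->; rewrite scale1r.
- move: e2; rewrite h dotZr e1 => /eqP; rewrite -subr_eq0 -{2}(mul1r (D y)) -mulrBl.
  by rewrite mulf_eq0 (gt_eqF Dp) orbF subr_eq0 => /eqP ->; rewrite scale1r.
have hb : 0 < (2^-1 : R) < 1.
  by rewrite invr_gt0 ltr0n /= invf_lt1 ?ltr0n // ltr1n.
have := hS _ _ _ hb nc.
set m := _ *: w1 + _ => Nm.
have Nm1 : N m < 1.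
  apply: (lt_le_trans Nm).
  have h1 : 0 <= (2^-1 : R) by rewrite invr_ge0 ler0n.
  have h2 : 0 <= 1 - (2^-1 : R) by rewrite subr_ge0 invf_le1 ?ler1n ?ltr0n.
  apply: (le_trans (lerD (ler_wpM2l h1 N1) (ler_wpM2l h2 N2))).
  by rewrite !mulr1 addrC subrK.
have em : dot y m = D y.
  by rewrite /m dotDr !dotZr e1 e2 -mulrDl addrC subrK mul1r.
have := dot_leD y m hN hD; rewrite em => H.
have : D y * N m < D y by rewrite -[X in _ < X]mulr1 ltr_pM2l.
by rewrite ltNge H.
Qed.
Lemma lip_continuous (R : realType) d (f : 'rV[R]_d -> R) (c : 'I_d -> R) :
  (forall i, 0 <= c i) ->
  (forall x w, f x - f w <= \sum_i `|x 0 i - w 0 i| * c i) -> continuous f.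
Proof.
move=> c0 hf x B /nbhs_ballP [e e0 eB]; apply/nbhs_ballP.
set C := \sum_i c i + 1.
have C0 : 0 < C by rewrite /C ltr_wpDl // sumr_ge0.
exists (e / C); first by rewrite /= divr_gt0.
move=> w [_ hw]; apply: eB.
have hb : forall i, `|x 0 i - w 0 i| < e / C.
  by move=> i; have := hw 0 i; rewrite -ball_normE /ball_ /=.
have key : \sum_i `|x 0 i - w 0 i| * c i < e.
  apply: (le_lt_trans (y := \sum_i e / C * c i)).
    by apply: ler_sum => i _; apply: ler_wpM2r => //; apply: ltW.
  rewrite -mulr_sumr mulrAC ltr_pdivrMr // ltr_pM2l // /C ltrDl //.
rewrite -ball_normE /ball_ /= ltr_norml; apply/andP; split.
  rewrite ltrNl opprB; apply: (le_lt_trans (hf w x)).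
  by under eq_bigr do rewrite distrC.
exact: (le_lt_trans (hf x w)).
Qed.
Lemma N_sum (R : realType) d (N : 'rV[R]_d -> R) (F : 'I_d -> 'rV[R]_d) :
  is_norm N -> N (\sum_i F i) <= \sum_i N (F i).
Proof.
move=> hN; elim/big_ind2 : _ => //; first by rewrite (N0 hN).
move=> x1 x2 y1 y2 h1 h2; case: hN => _ _ hT.
by apply: (le_trans (hT _ _)); apply: lerD.
Qed.

Lemma N_continuous (R : realType) d (N : 'rV[R]_d -> R) :
  is_norm N -> continuous N.
Proof.
move=> hN; apply: (@lip_continuous _ _ N (fun i => N 'e_i)).
  by move=> i; apply: N_ge0.
move=> x w; have hN' := hN; case: hN' => _ hZ hT.
have -> : N x = N ((x - w) + w) by rewrite subrK.
rewrite lerBlDr; apply: (le_trans (hT _ _)); rewrite lerD2r.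
rewrite {1}(row_sum_delta (x - w)); apply: (le_trans (N_sum _ hN)).
apply: ler_sum => i _; rewrite hZ [(x - w) 0 i]mxE [(- w) 0 i]mxE.
exact: lexx.
Qed.

Lemma dot_continuous (R : realType) d (z : 'rV[R]_d) : continuous (dot z).
Proof.
apply: (@lip_continuous _ _ _ (fun i => `|z 0 i|)) => // x w.
rewrite -dotNr -dotDr /dot; apply: ler_sum => i _.
rewrite !mxE mulrC -normrM; exact: ler_norm.
Qed.
Lemma dot_delta (R : realType) d (w : 'rV[R]_d) i : dot 'e_i w = w 0 i.
Proof.
rewrite /dot (bigD1 i) //= big1 ?addr0; first by rewrite mxE !eqxx mul1r.
by move=> j ji; rewrite mxE (negbTE ji) andbF mul0r.
Qed.

Lemma vmaxP (R : realType) d (N D : 'rV[R]_d -> R) y :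
  is_dual_norm N D -> y != 0 ->
  N (vmax N D y) <= 1 /\ dot y (vmax N D y) = D y.
Proof.
move=> hD y0; rewrite /vmax (negbTE y0).
apply: (xgetPex 0 (P := [set w | N w <= 1 /\ dot y w = D y])).
by have [_ [w hw]] := hD y; exists w.
Qed.

Lemma danskin (R : realType) d (N D : 'rV[R]_d -> R) y z L :
  is_norm N -> is_dual_norm N D -> strictly_convex N -> y != 0 ->
  (forall e, 0 < e -> exists w, [/\ N w <= 1, D y - e <= dot y w & L <= dot z w]) ->
  L <= dot z (vmax N D y).
Proof.
move=> hN hD hS y0 hE.
pose K := (N @^-1` [set r | r <= 1]) `&` (dot z @^-1` [set r | L <= r]).
have Kcl : closed K.
  apply: closedI; apply: preimage_closed.
  - by move=> x _; apply: N_continuous.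
  - exact: closed_le.
  - by move=> x _; apply: dot_continuous.
  - exact: closed_ge.
pose M i := D 'e_i + D (- 'e_i).
have KB : K `<=` [set v | forall i, `[- M i, M i]%classic (v ord0 i)].
  move=> w [/= Nw _] i; rewrite /= in_itv /=; apply/andP; split.
    rewrite lerNl -(dot_delta w) -dotNl.
    apply: (le_trans (dot_leD _ _ hN hD)); rewrite /M.
    apply: (le_trans (y := D (- 'e_i))); last by rewrite lerDr (D_ge0 _ hN hD).
    by rewrite -[X in _ <= X]mulr1 ler_wpM2l // (D_ge0 _ hN hD).
  rewrite -(dot_delta w); apply: (le_trans (dot_leD _ _ hN hD)); rewrite /M.
  apply: (le_trans (y := D 'e_i)); last by rewrite lerDl (D_ge0 _ hN hD).
  by rewrite -[X in _ <= X]mulr1 ler_wpM2l // (D_ge0 _ hN hD).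
have Kco : compact K.
  apply: (subclosed_compact Kcl _ KB).
  apply: (@rV_compact _ _ (fun i => `[- M i, M i]%classic)) => i.
  exact: segment_compact.
have Ico : compact (dot y @` K).
  by apply: continuous_compact => //; apply: continuous_subspaceT; apply: dot_continuous.
have Icl : closure (dot y @` K) (D y).
  move=> B /nbhs_ballP [e e0 eB].
  have e20 : 0 < e / 2 by rewrite divr_gt0.
  have [w [Nw hw Lw]] := hE _ e20.
  exists (dot y w); split; first by exists w.
  apply: eB; rewrite -ball_normE /ball_ /= ger0_norm.
    rewrite ltrBlDr -ltrBlDl; apply: (lt_le_trans _ hw).
    by rewrite ltrD2l ltrN2 ltr_pdivrMr // ltr_pMr // ltr1n.
  rewrite subr_ge0; apply: (le_trans (dot_leD _ _ hN hD)).
  by rewrite -[X in _ <= X]mulr1 ler_wpM2l // (D_ge0 _ hN hD).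
have [w [Nw Lw] ew] := compact_closed (@Rhausdorff R) Ico Icl.
have [vN ve] := vmaxP hD y0.
by rewrite (max_unique hN hD hS y0 vN ve Nw ew).
Qed.
Lemma hmargin_elem (R : realType) d (Sp Sm : set 'rV[R]_d) y b dv :
  hmargin Sp Sm y b = dv%:E ->
  (forall x, Sp x -> dv <= dot y x + b) /\ (forall x, Sm x -> dv <= - dot y x - b).
Proof.
move=> h; split => x Sx; rewrite -lee_fin -h /hmargin.
  by rewrite ge_min; apply/orP; left; apply: ge_ereal_inf; exists (dot y x + b)%:E => //; exists x.
by rewrite ge_min; apply/orP; right; apply: ge_ereal_inf; exists (- dot y x - b)%:E => //; exists x.
Qed.

Lemma hmargin_ge (R : realType) d (Sp Sm : set 'rV[R]_d) y b r :
  (forall x, Sp x -> r <= dot y x + b) -> (forall x, Sm x -> r <= - dot y x - b) ->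
  (r%:E <= hmargin Sp Sm y b)%E.
Proof.
move=> hp hm; rewrite /hmargin le_min; apply/andP; split;
  apply/ereal_infP => _ [x Sx <-]; rewrite lee_fin; [exact: hp|exact: hm].
Qed.
Lemma scaled (R : realType) d (N D : 'rV[R]_d -> R) (Sp Sm : set 'rV[R]_d)
    y b dd u beta r :
  is_norm N -> is_dual_norm N D -> 0 < r ->
  (exists x, Sp x) -> (exists x, Sm x) ->
  (forall x, Sp x -> r <= dot u x + beta) -> (forall x, Sm x -> r <= - dot u x - beta) ->
  optimal_sol D Sp Sm y b dd -> r <= dd * D u.
Proof.
move=> hN hD r0 [xp Sxp] [xm Sxm] hp hm [_ _ hopt].
have u0 : u != 0.
  apply/negP => /eqP u0; have := hp _ Sxp; have := hm _ Sxm.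
  rewrite u0 !dot0l oppr0 add0r => h1 h2.
  have : r + r <= 0 by rewrite -(subrr beta) lerD // -[X in _ <= X]add0r.
  by rewrite leNgt addr_gt0.
have Du := D_pos hN hD u0.
have hD1 : D ((D u)^-1 *: u) <= 1.
  rewrite (D_scale _ hN hD); last by rewrite invr_ge0 ltW.
  by rewrite mulVf ?gt_eqF.
have h1 : forall x, Sp x -> r / D u <= dot ((D u)^-1 *: u) x + beta / D u.
  move=> x Sx; rewrite dotZl [_^-1 * _]mulrC -mulrDl ler_pM2r ?invr_gt0 //; exact: hp.
have h2 : forall x, Sm x -> r / D u <= - dot ((D u)^-1 *: u) x - beta / D u.
  move=> x Sx; rewrite dotZl [_^-1 * _]mulrC -mulNr -mulrBl ler_pM2r ?invr_gt0 //; exact: hm.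
have := le_trans (hmargin_ge h1 h2) (hopt _ _ hD1).
by rewrite lee_fin ler_pdivrMr.
Qed.
Lemma step (R : realType) d (N D : 'rV[R]_d -> R) (Sp Sm : set 'rV[R]_d)
    yst bst m y b dd :
  is_norm N -> is_dual_norm N D -> strictly_convex N -> yst != 0 -> 0 < m ->
  (exists x, Sp x) -> (exists x, Sm x) ->
  (forall x, Sp x -> m <= dot yst x + bst) -> (forall x, Sm x -> m <= - dot yst x - bst) ->
  optimal_sol D Sp Sm y b dd ->
  m <= dd * D yst /\ m / dd <= dot yst (vmax N D y).
Proof.
move=> hN hD hS yst0 m0 ne1 ne2 hp hm hopt.
have h1 := scaled hN hD m0 ne1 ne2 hp hm hopt.
have Dz := D_pos hN hD yst0.
have dd0 : 0 < dd.
  rewrite ltNge; apply/negP => H; move: h1; rewrite leNgt => /negP; apply.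
  by apply: (le_lt_trans _ m0); rewrite pmulr_lle0.
split => //.
have hopt' := hopt; case: hopt' => Dy1 hmy _.
have [hpy hmy'] := hmargin_elem hmy.
have y0 : y != 0.
  apply/negP => /eqP y0; case: ne1 => xp Sxp; case: ne2 => xm Sxm.
  have := hpy _ Sxp; have := hmy' _ Sxm; rewrite y0 !dot0l oppr0 !add0r.
  move=> a1 a2; lra.
apply: (danskin hN hD hS y0) => e e0.
pose C := D yst + D (- yst) + 1.
have C0 : 0 < C by rewrite /C ltr_wpDl // addr_ge0 // (D_ge0 _ hN hD).
pose eps := e / C.
have eps0 : 0 < eps by rewrite divr_gt0.
have [_ [w [Nw ew]]] := hD (y + eps *: yst).
exists w; split => //; last first.
  have hsc : dd + eps * m <= dd * D (y + eps *: yst).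
    apply: (scaled hN hD _ ne1 ne2 _ _ hopt (beta := b + eps * bst)).
    - by rewrite addr_gt0 // mulr_gt0.
    - move=> x Sx; rewrite dotDl dotZl.
      have := hpy _ Sx; have := hp _ Sx => a1 a2.
      have : eps * m <= eps * (dot yst x + bst) by rewrite ler_pM2l.
      lra.
    - move=> x Sx; rewrite dotDl dotZl.
      have := hmy' _ Sx; have := hm _ Sx => a1 a2.
      have : eps * m <= eps * (- dot yst x - bst) by rewrite ler_pM2l.
      lra.
  move: hsc; rewrite -ew dotDl dotZl => hsc.
  have : dot y w <= 1.
    apply: (le_trans (dot_leD _ _ hN hD)); apply: (le_trans _ Dy1).
    by rewrite -[X in _ <= X]mulr1 ler_wpM2l // (D_ge0 _ hN hD).
  move=> hyw; rewrite ler_pdivrMr //; nra.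
have [_ [v [Nv ev]]] := hD y.
have hv : D y + eps * dot yst v <= dot y w + eps * dot yst w.
  rewrite -!dotZl -ev -!dotDl ew.
  by have [hh _] := hD (y + eps *: yst); apply: hh.
have hv1 : - D (- yst) <= dot yst v.
  rewrite lerNl -dotNl; apply: (le_trans (dot_leD _ _ hN hD)).
  by rewrite -[X in _ <= X]mulr1 ler_wpM2l // (D_ge0 _ hN hD).
have hw1 : dot yst w <= D yst.
  apply: (le_trans (dot_leD _ _ hN hD)).
  by rewrite -[X in _ <= X]mulr1 ler_wpM2l // (D_ge0 _ hN hD).
have he : eps * C = e by rewrite /eps mulrAC -mulrA divff ?gt_eqF // mulr1.
have : eps * (D yst + D (- yst)) <= e.
  rewrite -he ler_pM2l // /C lerDl //.
rewrite /C in he.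
have h3 : eps * (- D (- yst)) <= eps * dot yst v by rewrite ler_pM2l.
have h4 : eps * dot yst w <= eps * D yst by rewrite ler_pM2l.
move=> h5; lra.
Qed.
Lemma calA_margin (R : realType) d (D : 'rV[R]_d -> R) lab calA yst bst dst a :
  0 < D yst -> set_margin D lab calA yst bst = dst%:E -> calA a ->
  (lab a -> dst * D yst <= dot yst a + bst) /\
  (~~ lab a -> dst * D yst <= - dot yst a - bst).
Proof.
move=> Dz hs Aa.
have : dst <= smargin D lab a yst bst.
  rewrite -lee_fin -hs /set_margin; apply: ge_ereal_inf.
  by exists (smargin D lab a yst bst)%:E => //; exists a.
rewrite /smargin; case: (lab a) => /= H; split => // _;
  rewrite -ler_pdivlMr //; move: H.
  by rewrite mul1r.
by rewrite mulN1r opprD.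
Qed.

Lemma proxy_sep (R : realType) d (N D : 'rV[R]_d -> R) (c : R) (lab : 'rV[R]_d -> bool)
   yst bst (m : R) a y (b : R) :
  0 <= dot yst (vmax N D y) ->
  (lab a -> m <= dot yst a + bst) -> (~~ lab a -> m <= - dot yst a - bst) ->
  (lab a -> m <= dot yst (proxy N D c lab a y b) + bst) /\
  (~~ lab a -> m <= - dot yst (proxy N D c lab a y b) - bst).
Proof.
move=> hv hp hm; rewrite /proxy; case: eqP => _ //.
case: ifP => // /andP [q0 q2]; case: (boolP (lab a)) => la; split => // _.
  rewrite dotDr dotZr; apply: (le_trans (hp la)).
  have : 0 <= (2 / c - (dot y a + b) / D y) * dot yst (vmax N D y).
    by rewrite mulr_ge0 // subr_ge0 ltW.
  move: ((2 / c - (dot y a + b) / D y) * dot yst (vmax N D y)) => z z0.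
  by rewrite -addrA [z + _]addrC addrA lerDl.
rewrite dotDr dotNr dotZr; apply: (le_trans (hm la)).
have : 0 <= (dot y a + b) / D y * dot yst (vmax N D y) by rewrite mulr_ge0.
move: ((dot y a + b) / D y * dot yst (vmax N D y)) => z z0.
by rewrite opprD opprK -addrA [z - _]addrC addrA lerDl.
Qed.
Unset Implicit Arguments.
Set Strict Implicit.
Theorem mainTheorem6 (R : realType) (d : nat)
    (N D : 'rV[R]_d -> R) (c : R)
    (calA : set 'rV[R]_d) (lab : 'rV[R]_d -> bool)
    (yst : 'rV[R]_d) (bst dst : R)
    (init : seq 'rV[R]_d) (A : nat -> 'rV[R]_d)
    (y : nat -> 'rV[R]_d) (b dd : nat -> R)
    (Sp Sm : nat -> set 'rV[R]_d) :
  is_norm N -> is_dual_norm N D -> 0 < c ->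
  strictly_convex N -> strictly_convex D ->
  margin_assumption D lab calA yst bst dst ->
  init_ok calA lab init ->
  Sp 0%N = init_set lab init true -> Sm 0%N = init_set lab init false ->
  (forall t, (0 < t)%N -> calA (A t)) ->
  (forall t : nat,
     Sp t.+1 = (if lab (A t.+1)
                then Sp t `|` [set proxy N D c lab (A t.+1) (y t.+1) (b t.+1)]
                else Sp t) /\
     Sm t.+1 = (if lab (A t.+1) then Sm t
                else Sm t `|` [set proxy N D c lab (A t.+1) (y t.+1) (b t.+1)])) ->
  (forall t : nat, optimal_sol D (Sp t) (Sm t) (y t.+1) (b t.+1) (dd t.+1)) ->
  forall t : nat, (0 < t)%N ->
    D yst * (dst / dd t) <= dot yst (vmax N D (y t)) /\
    0 < D yst * (dst / dd t).
Proof.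
move=> hN hD c0 hS _ [yst0 hsm _ dst0] [initA hasp hasm _] Sp0 Sm0 Acal hupd hopt.
have Dz := D_pos hN hD yst0.
pose m := dst * D yst.
have m0 : 0 < m by rewrite mulr_gt0.
pose P k := [/\ (exists x, Sp k x), (exists x, Sm k x),
   (forall x, Sp k x -> m <= dot yst x + bst) &
   (forall x, Sm k x -> m <= - dot yst x - bst)].
have stepk : forall k, P k ->
    m <= dd k.+1 * D yst /\ m / dd k.+1 <= dot yst (vmax N D (y k.+1)).
  move=> k [h1 h2 h3 h4]; exact: (step hN hD hS yst0 m0 h1 h2 h3 h4 (hopt k)).
have allP : forall k, P k.
  elim=> [|k IH].
    split.
    - by have /hasP [x xi lx] := hasp; exists x; rewrite Sp0; split.
    - by have /hasP [x xi lx] := hasm; exists x; rewrite Sm0; split => //; apply/negbTE.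
    - move=> x; rewrite Sp0 => -[xi lx].
      by have [h _] := calA_margin Dz hsm (initA x xi); apply: h; rewrite lx.
    - move=> x; rewrite Sm0 => -[xi lx].
      by have [_ h] := calA_margin Dz hsm (initA x xi); apply: h; rewrite lx.
  have [mle hv] := stepk k IH.
  have dd0 : 0 < dd k.+1.
    rewrite ltNge; apply/negP => H; move: mle; rewrite leNgt => /negP; apply.
    by apply: (le_lt_trans _ m0); rewrite pmulr_lle0.
  have hv0 : 0 <= dot yst (vmax N D (y k.+1)).
    by apply: le_trans hv; rewrite divr_ge0 // ltW.
  have Ak := Acal k.+1 isT.
  have [hA1 hA2] := calA_margin Dz hsm Ak.
  have [hq1 hq2] := proxy_sep c (b k.+1) hv0 hA1 hA2.
  case: IH => [i1 i2 i3 i4]; have [e1 e2] := hupd k.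
  rewrite /P e1 e2; case: (boolP (lab (A k.+1))) => la; split.
  - by case: i1 => x hx; exists x; left.
  - by [].
  - by move=> x [/i3 //|->]; apply: hq1.
  - by [].
  - by [].
  - by case: i2 => x hx; exists x; left.
  - by [].
  - by move=> x [/i4 //|->]; apply: hq2.
move=> [//|k] _.
have [mle hv] := stepk k (allP k).
have dd0 : 0 < dd k.+1.
  rewrite ltNge; apply/negP => H; move: mle; rewrite leNgt => /negP; apply.
  by apply: (le_lt_trans _ m0); rewrite pmulr_lle0.
have -> : D yst * (dst / dd k.+1) = m / dd k.+1 by rewrite /m mulrA [D yst * _]mulrC.
by split => //; rewrite divr_gt0.
Qed.
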